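(* Let $v_1,\dots,v_m\in\mathbb{R}^d$, $V=\{v_1,\dots,v_m\}$, and $r\in\mathbb{R}^d$. For every minimal $r$-balanced subset $S\subset V$, the corresponding (unique) weight vector $\lambda(S)$ is an extreme point of the polytope $F(V,r)$.
   Context: A subset $S\subset V$ is $r$-balanced if $r\in\mathrm{relint}(\mathrm{conv}(S))$; it is minimal $r$-balanced if it is $r$-balanced and no proper subset of it is $r$-balanced. Let $V$ also denote the $d\times m$ matrix with columns $v_1,\dots,v_m$. A weight vector is a vector $\lambda\in\mathbb{R}^m$ with $\lambda\ge0$, $\sum_i\lambda_i=1$, $V\lambda=r$; $F(V,r)$ is the set of all weight vectors. $\mathrm{supp}(\lambda)$ is the set of points $v_i$ with $\lambda_i\neq0$. For $S\subset V$, $\lambda(S)=\{\lambda\in F(V,r)\mid\mathrm{supp}(\lambda)\subset S\}$; for minimal $r$-balanced $S$ this set is a single vector, denoted $\lambda(S)$. *)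

(* Defs.v *)
From mathcomp Require Import all_boot all_order all_algebra.
From mathcomp Require Import reals.
Set Implicit Arguments. Unset Strict Implicit. Unset Printing Implicit Defensive.
Import Order.TTheory GRing.Theory Num.Theory.
Local Open Scope ring_scope.

Section Defs.
Variables (R : realType) (d m : nat).
(* V : d x m matrix whose columns  col i V  are the points v_1,...,v_m;
   subsets of V are represented by index sets S : {set 'I_m}. *)
Variable V : 'M[R]_(d, m).

Definition conv_hull (S : {set 'I_m}) (x : 'cV[R]_d) : Prop :=
  exists mu : 'cV[R]_m,
    (forall i, 0 <= mu i 0) /\ (forall i, i \notin S -> mu i 0 = 0) /\
    \sum_i mu i 0 = 1 /\ V *m mu = x.

Definition aff_hull (S : {set 'I_m}) (x : 'cV[R]_d) : Prop :=
  exists mu : 'cV[R]_m,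
    (forall i, i \notin S -> mu i 0 = 0) /\
    \sum_i mu i 0 = 1 /\ V *m mu = x.

Definition sqdist (x y : 'cV[R]_d) : R := \sum_k (x k 0 - y k 0) ^+ 2.

Definition in_relint_conv (S : {set 'I_m}) (r : 'cV[R]_d) : Prop :=
  conv_hull S r /\
  exists eps : R, 0 < eps /\
    forall x, aff_hull S x -> sqdist x r < eps ^+ 2 -> conv_hull S x.

Definition balanced (r : 'cV[R]_d) (S : {set 'I_m}) : Prop :=
  in_relint_conv S r.

Definition minimal_balanced (r : 'cV[R]_d) (S : {set 'I_m}) : Prop :=
  balanced r S /\ forall T : {set 'I_m}, T \proper S -> ~ balanced r T.

Definition weight_vector (r : 'cV[R]_d) (lam : 'cV[R]_m) : Prop :=
  (forall i, 0 <= lam i 0) /\ \sum_i lam i 0 = 1 /\ V *m lam = r.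

Definition supp (lam : 'cV[R]_m) : {set 'I_m} := [set i | lam i 0 != 0].

Definition lambda_set (r : 'cV[R]_d) (S : {set 'I_m}) (lam : 'cV[R]_m) : Prop :=
  weight_vector r lam /\ supp lam \subset S.

Definition extreme_point (r : 'cV[R]_d) (lam : 'cV[R]_m) : Prop :=
  weight_vector r lam /\
  forall (mu nu : 'cV[R]_m) (t : R),
    weight_vector r mu -> weight_vector r nu -> 0 < t -> t < 1 ->
    lam = t *: mu + (1 - t) *: nu -> mu = lam /\ nu = lam.
End Defs.

(* Main.v *)
Require Import Defs.
From mathcomp Require Import all_boot all_order all_algebra.
From mathcomp Require Import reals.
From mathcomp Require Import ring lra.
Import Order.TTheory GRing.Theory Num.Theory.
Local Open Scope ring_scope.

Lemma pos_lb (R : realType) (m : nat) (T : {set 'I_m}) (f : 'I_m -> R) :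
  (forall i, i \in T -> 0 < f i) ->
  exists c : R, 0 < c /\ forall i, i \in T -> c <= f i.
Proof.
move=> Hf; case: (set_0Vmem T) => [->|[i0 Hi0]].
  by exists 1; split=> // i; rewrite inE.
case: (@arg_minP _ R _ i0 (mem T) f Hi0) => j Hj Hmin.
by exists (f j); split; [exact: Hf | move=> i Hi; exact: Hmin].
Qed.

Lemma sq_le_sum (R : realType) (d : nat) (F : 'I_d -> R) (k : 'I_d) :
  F k ^+ 2 <= \sum_j F j ^+ 2.
Proof.
by rewrite (bigD1 k) //= lerDl sumr_ge0 // => j _; rewrite sqr_ge0.
Qed.

Lemma wv_balanced (R : realType) (d m : nat) (V : 'M[R]_(d, m))
    (r : 'cV[R]_d) (g : 'cV[R]_m) :
  weight_vector V r g -> balanced V r (supp g).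
Proof.
move=> [g0 [g1 g2]].
set T := supp g.
have offT : forall i, i \notin T -> g i 0 = 0.
  by move=> i; rewrite inE negbK => /eqP.
split; first by exists g.
have posT : forall i, i \in T -> 0 < g i 0.
  by move=> i; rewrite inE => Hi; rewrite lt0r Hi g0.
have [c [c0 Hc]] := @pos_lb R m T (fun i => g i 0) posT.
set A : 'M[R]_(d + 1, m) := col_mx V (const_mx 1).
set Dg : 'M[R]_m := diag_mx (\row_i (if i \in T then 1 else 0)).
set M := Dg *m A^T.
set P := pinvmx M.
set K : R := 1 + \sum_i \sum_k `|P k i|.
have K0 : 0 < K.
  by rewrite /K ltr_pwDl // sumr_ge0 // => i _; rewrite sumr_ge0.
exists (c / K); split; first by rewrite divr_gt0.
move=> x [mu [mu0 [mu1 mu2]]] Hx.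
set del := mu - g.
have delT : del^T *m Dg = del^T.
  apply/matrixP=> i j; rewrite mul_mx_diag !mxE.
  case: ifP => Hj; first by rewrite mulr1.
  by rewrite mulr0 [i]ord1 mu0 ?offT ?Hj // subr0.
set w := (A *m del)^T.
have wM : w = del^T *m M by rewrite /w trmx_mul /M mulmxA delT.
have wsub : (w <= M)%MS by apply/submxP; exists del^T.
set e := (w *m P *m Dg)^T.
have Ae : A *m e = A *m del.
  apply: trmx_inj; rewrite trmx_mul /e trmxK -(mulmxA (w *m P)) -/M.
  by rewrite (mulmxKpV wsub).
move: Ae; rewrite /A !mul_col_mx => /eq_col_mx [Ve Se].
have sum1 : forall v : 'cV[R]_m, ((const_mx 1 : 'M[R]_(1,m)) *m v) 0 0 = \sum_i v i 0.
  by move=> v; rewrite !mxE; apply: eq_bigr => i _; rewrite ?mxE mul1r.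
have Vdel : V *m del = x - r by rewrite /del mulmxBr mu2 g2.
have Sdel : const_mx 1 *m del = 0 :> 'M[R]_(1,1).
  apply/matrixP => a b; rewrite [a]ord1 [b]ord1 sum1 mxE.
  rewrite (eq_bigr (fun i => mu i 0 - g i 0)); last by move=> i _; rewrite !mxE.
  by rewrite sumrB mu1 g1 subrr.
have eps0 : 0 < c / K by rewrite divr_gt0.
have wb : forall k, `|w 0 k| <= c / K.
  move=> k; rewrite /w mxE mul_col_mx Vdel Sdel.
  case: (splitP k) => j Hk.
  - have -> : k = lshift 1 j by apply/val_inj.
    rewrite col_mxEu !mxE.
    have h := @sq_le_sum R d (fun k => x k 0 - r k 0) j.
    move: Hx; rewrite /sqdist => Hx.
    have h2 : (x j 0 - r j 0) ^+ 2 < (c / K) ^+ 2 by apply: le_lt_trans h Hx.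
    move: h2; set a := x j 0 - r j 0; set b := c / K => h2.
    rewrite !expr2 in h2; rewrite ler_norml; apply/andP; have b0 : 0 < b := eps0.
    split; nra.
  - have -> : k = rshift d j by apply/val_inj.
    by rewrite col_mxEd mxE normr0 ltW.
have eb : forall i, `|e i 0| < c.
  move=> i; rewrite /e mxE mul_mx_diag mxE [X in _ * X]mxE.
  apply: (le_lt_trans (y := `|(w *m P) 0 i|)).
    by case: ifP => _; rewrite ?mulr1 ?mulr0 ?normr0.
  apply: (le_lt_trans (y := c / K * \sum_k `|P k i|)).
    rewrite mxE; apply: le_trans (ler_norm_sum _ _ _) _; rewrite mulr_sumr.
    by apply: ler_sum => k _; rewrite normrM ler_wpM2r.
  have hs : \sum_k `|P k i| <= K - 1.
    rewrite /K addrAC subrr add0r (bigD1 i) //= lerDl sumr_ge0 // => j _.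
    by rewrite sumr_ge0.
  have hK : c / K * K = c by rewrite divfK // gt_eqF.
  move: hs hK; set s := \sum_k `|P k i|; set b := c / K => hs hK.
  have b0 : 0 < b := eps0.
  nra.
have eT : forall i, i \notin T -> e i 0 = 0.
  move=> i Hi; rewrite /e mxE mul_mx_diag mxE [X in _ * X]mxE.
  by rewrite (negbTE Hi) mulr0.
have esum : \sum_i e i 0 = 0.
  by rewrite -sum1 Se Sdel mxE.
exists (g + e); split.
  move=> i; rewrite mxE; case: (boolP (i \in T)) => Hi.
    have := eb i; have := Hc i Hi; rewrite ltr_norml => h1 /andP [h2 h3].
    lra.
  by rewrite offT // eT // addr0.
split.
  by move=> i Hi; rewrite mxE offT // eT // addr0.
split.
  rewrite (eq_bigr (fun i => g i 0 + e i 0)); last by move=> i _; rewrite mxE.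
  by rewrite big_split /= g1 esum addr0.
by rewrite mulmxDr g2 Ve Vdel addrC subrK.
Qed.

Lemma supp_full (R : realType) (d m : nat) (V : 'M[R]_(d, m))
    (r : 'cV[R]_d) (S : {set 'I_m}) (g : 'cV[R]_m) :
  minimal_balanced V r S -> weight_vector V r g -> supp g \subset S ->
  supp g = S.
Proof.
move=> [_ Hmin] Hg Hsub; case: (eqVneq (supp g) S) => // Hne.
exfalso; apply: (Hmin (supp g)); last exact: wv_balanced.
by rewrite properEneq Hne Hsub.
Qed.

Lemma ext_half (R : realType) (d m : nat) (V : 'M[R]_(d, m))
    (r : 'cV[R]_d) (S : {set 'I_m}) (lam mu nu : 'cV[R]_m) (t : R) :
  minimal_balanced V r S -> lambda_set V r S lam ->
  weight_vector V r mu -> weight_vector V r nu -> 0 < t -> t < 1 ->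
  lam = t *: mu + (1 - t) *: nu -> mu = lam.
Proof.
move=> HS [[l0 [l1 l2]] Hsub] [m0 [m1 m2]] [n0 [n1 n2]] t0 t1 Heq.
have lamS : forall i, i \notin S -> lam i 0 = 0.
  move=> i Hi; apply/eqP; apply: contraNT Hi => H.
  by apply: (subsetP Hsub); rewrite inE.
have lamE : forall i, lam i 0 = t * mu i 0 + (1 - t) * nu i 0.
  by move=> i; rewrite Heq !mxE.
have muS : forall i, i \notin S -> mu i 0 = 0.
  move=> i Hi; have := lamE i; rewrite lamS // => h.
  have := m0 i; have := n0 i; nra.
case: (pickP (fun i => mu i 0 < lam i 0)) => [i0 Hi0 | Hno]; last first.
  have H0 : forall i, 0 <= mu i 0 - lam i 0.
    by move=> i; have := Hno i; rewrite /= subr_ge0 => /negbT; rewrite -leNgt.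
  have Hs : \sum_i (mu i 0 - lam i 0) = 0 by rewrite sumrB m1 l1 subrr.
  apply/matrixP => i j; rewrite [j]ord1; apply/eqP; rewrite -subr_eq0; apply/eqP.
  exact: (psumr_eq0P (fun i _ => H0 i) Hs).
exfalso.
case: (@arg_minP _ R _ i0 (fun i => mu i 0 < lam i 0)
         (fun i => lam i 0 / (lam i 0 - mu i 0)) Hi0) => j Hj Hmin.
set s := lam j 0 / (lam j 0 - mu j 0).
have dj : 0 < lam j 0 - mu j 0 by rewrite subr_gt0.
have s0 : 0 < s.
  rewrite divr_gt0 //; have := m0 j; move: Hj => /= Hj; lra.
have sj : s * (lam j 0 - mu j 0) = lam j 0 by rewrite divfK // gt_eqF.
set ga := (1 - s) *: lam + s *: mu.
have gaE : forall i, ga i 0 = (1 - s) * lam i 0 + s * mu i 0.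
  by move=> i; rewrite !mxE.
have Hga : weight_vector V r ga.
  split.
    move=> i; rewrite gaE.
    have -> : (1 - s) * lam i 0 + s * mu i 0 = lam i 0 - s * (lam i 0 - mu i 0) by ring.
    case: (ltP (mu i 0) (lam i 0)) => Hi.
      by have := Hmin i Hi; rewrite /= ler_pdivlMr ?subr_gt0 // subr_ge0.
    rewrite subr_ge0; apply: le_trans (l0 i).
    by rewrite mulr_ge0_le0 ?subr_le0 // ltW.
  split.
    rewrite (eq_bigr _ (fun i _ => gaE i)) big_split /= -!mulr_sumr l1 m1.
    by rewrite mulr1 mulr1 subrK.
  by rewrite mulmxDr -!scalemxAr l2 m2 -scalerDl subrK scale1r.
have gaS : supp ga \subset S.
  apply/subsetP => i; rewrite inE => Hi; apply: contraR Hi => Hi.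
  by rewrite gaE lamS // muS // !mulr0 addr0.
have Hfull := @supp_full R d m V r S ga HS Hga gaS.
have jS : j \in S.
  apply: (subsetP Hsub); rewrite inE; apply/eqP => h.
  by move: Hj; rewrite /= h => Hj; have := m0 j; lra.
move: jS; rewrite -Hfull inE gaE => /eqP; apply.
have -> : (1 - s) * lam j 0 + s * mu j 0 = lam j 0 - s * (lam j 0 - mu j 0) by ring.
by rewrite sj subrr.
Qed.

Theorem proposition1 (R : realType) (d m : nat) (V : 'M[R]_(d, m))
    (r : 'cV[R]_d) :
  injective (fun i : 'I_m => col i V) ->
  forall S : {set 'I_m}, minimal_balanced V r S ->
  forall lam : 'cV[R]_m, lambda_set V r S lam -> extreme_point V r lam.
Proof.
move=> _ S HS lam Hl; split; first by case: Hl.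
move=> mu nu t Hmu Hnu t0 t1 Heq; split.
  exact: (@ext_half R d m V r S lam mu nu t HS Hl Hmu Hnu t0 t1 Heq).
apply: (@ext_half R d m V r S lam nu mu (1 - t) HS Hl Hnu Hmu).
- lra.
- lra.
have -> : 1 - (1 - t) = t by ring.
by rewrite Heq addrC.
Qed.
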